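(* Let $G$ be a finite simple graph without isolated vertices, and consider a position of the Disjoint Domination Game (or its biased $(d:s)$ variant) on $G$ in which no vertex has a monochromatic closed neighborhood. Let $C$ be a connected component of $G$, and suppose there are an uncolored vertex $u\in V(C)$ and a color $c\in\{p,b\}$ such that coloring $u$ with $c$ is a legal move and, after it, every vertex of $C$ is dominated by both $V_p$ and $V_b$. Then no sequence of legal moves from the current position results in a vertex $v\in V(C)$ with $N[v]\subseteq V_p$ or $N[v]\subseteq V_b$.
   Context: $N[v]$ denotes the closed neighborhood of $v$. In the Disjoint Domination Game, vertices are colored one at a time with colors $p$ or $b$ (either player may use either color); $V_p,V_b$ are the current sets of vertices of each color; coloring a vertex $v$ with color $c$ is legal iff $v$ is uncolored and some $w\in N[v]$ satisfies $N[w]\cap V_c=\emptyset$ (before the coloring). A vertex $x$ is dominated by a set $S$ if $N[x]\cap S\neq\emptyset$. *)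

(* Defs.v *)
From mathcomp Require Import all_boot.
Set Implicit Arguments. Unset Strict Implicit. Unset Printing Implicit Defensive.

(* A finite simple graph: vertex type T : finType, edge relation e : rel T,
   symmetric and irreflexive (hypotheses of the theorem). *)

Inductive color := cp | cb.

Section DDG.
Variables (T : finType) (e : rel T).

Definition cnbhd (v : T) : {set T} := [set w | (w == v) || e v w].

Definition position := ({set T} * {set T})%type.

Definition colset (pos : position) (c : color) : {set T} :=
  match c with cp => pos.1 | cb => pos.2 end.

Definition dominated (S : {set T}) (x : T) : bool :=
  cnbhd x :&: S != set0.

Definition legal (pos : position) (v : T) (c : color) : bool :=
  (v \notin pos.1 :|: pos.2) &&
  [exists w in cnbhd v, cnbhd w :&: colset pos c == set0].

Definition play (pos : position) (v : T) (c : color) : position :=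
  match c with
  | cp => (v |: pos.1, pos.2)
  | cb => (pos.1, v |: pos.2)
  end.

Fixpoint play_seq (pos : position) (s : seq (T * color)) : position :=
  match s with
  | [::] => pos
  | (v, c) :: s' => play_seq (play pos v c) s'
  end.

Fixpoint legal_seq (pos : position) (s : seq (T * color)) : Prop :=
  match s with
  | [::] => True
  | (v, c) :: s' => legal pos v c /\ legal_seq (play pos v c) s'
  end.

Definition component (r : T) : {set T} := [set x | connect e r x].

End DDG.

(* Main.v *)
Require Import Defs.
From mathcomp Require Import all_boot.
Set Implicit Arguments. Unset Strict Implicit. Unset Printing Implicit Defensive.

Section Aux.
Variables (T : finType) (e : rel T).

Definition flipc (d : color) := match d with cp => cb | cb => cp end.
Definition ceq (c d : color) : bool :=
  match c, d with cp, cp | cb, cb => true | _, _ => false end.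
Lemma ceqP c d : reflect (c = d) (ceq c d).
Proof. by case: c; case: d; constructor. Qed.

Lemma colset_play (pos : position T) v c d :
  colset (play pos v c) d = if ceq c d then v |: colset pos d else colset pos d.
Proof. by case: c; case: d. Qed.

Lemma grow s : forall (pos : position T) d, colset pos d \subset colset (play_seq pos s) d.
Proof.
elim: s => [|[v c] s IH] pos d /=; first exact: subxx.
apply: subset_trans (IH _ d).
rewrite colset_play; case: (ceq c d) => //; exact: subsetUr.
Qed.

Definition disjp (pos : position T) := forall x d,
  x \in colset pos d -> x \in colset pos (flipc d) -> False.

Lemma disj_pres s : forall (pos : position T), legal_seq e pos s -> disjp pos ->
  disjp (play_seq pos s).
Proof.
elim: s => [|[v c] s IH] pos //= [Hl Hs] Hd.
apply: IH => //; move: Hl Hd; clear.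
move=> Hl Hd x d; rewrite !colset_play.
move: Hl; rewrite /legal => /andP[Hv _].
have Hv1 : v \notin pos.1 by apply: contra Hv; rewrite inE => ->.
have Hv2 : v \notin pos.2 by apply: contra Hv; rewrite inE => ->; rewrite orbT.
have Hd1 : x \in pos.1 -> x \in pos.2 -> False by exact: (Hd x cp).
case: c; case: d => /=; rewrite ?inE.
all: case: eqP => [->|_] /=; rewrite ?(negbTE Hv1) ?(negbTE Hv2) //.
all: by move=> A B; apply: Hd1.
Qed.

Lemma stuck (S : {set T}) d
  (closed : forall x w, x \in S -> w \in cnbhd e x -> w \in S) s :
  forall (pos : position T), legal_seq e pos s ->
  (forall w, w \in S -> cnbhd e w :&: colset pos d != set0) ->
  forall x, x \in S -> x \in colset (play_seq pos s) d -> x \in colset pos d.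
Proof.
elim: s => [|[v c] s IH] pos //= [Hl Hs] Hd x xS Hx.
have Hd' : forall w, w \in S -> cnbhd e w :&: colset (play pos v c) d != set0.
  move=> w wS; apply: contraNN (Hd w wS) => /eqP H.
  apply/eqP; apply/eqP; rewrite -subset0 -H; apply: setIS.
  exact: (grow [:: (v, c)] pos d).
have := IH _ Hs Hd' x xS Hx; rewrite colset_play.
case: ceqP => // Hcd; move=> /setU1P[Exv|//]; subst c; rewrite Exv in xS *.
move: Hl; rewrite /legal => /andP[_ /existsP[w /andP[wN /eqP Hw]]].
by move: (Hd w (closed _ _ xS wN)); rewrite Hw eqxx.
Qed.

Lemma main_d (S : {set T}) d
  (closed : forall x w, x \in S -> w \in cnbhd e x -> w \in S)
  (pos : position T) (Hdisj : disjp pos)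
  (no_mono : forall v, ~~ (cnbhd e v \subset colset pos d))
  (Hd : forall w, w \in S -> cnbhd e w :&: colset pos d != set0)
  s (Hs : legal_seq e pos s) v (vS : v \in S) :
  ~~ (cnbhd e v \subset colset (play_seq pos s) d) /\
  ~~ (cnbhd e v \subset colset (play_seq pos s) (flipc d)).
Proof.
split.
  apply: contraNN (no_mono v) => /subsetP H; apply/subsetP => y yN.
  exact: (stuck closed Hs Hd (closed _ _ vS yN) (H _ yN)).
apply/negP => /subsetP H.
have /set0Pn[y] := Hd v vS; rewrite inE => /andP[yN yd].
have yd' := subsetP (grow s pos d) _ yd.
exact: (disj_pres Hs Hdisj yd' (H _ yN)).
Qed.

End Aux.

Theorem lemma9 (T : finType) (e : rel T)
  (e_sym : symmetric e) (e_irr : irreflexive e)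
  (no_isolated : forall v : T, exists w, e v w)
  (Vp Vb : {set T}) (disj : [disjoint Vp & Vb])
  (no_mono : forall v : T,
      ~~ (cnbhd e v \subset Vp) /\ ~~ (cnbhd e v \subset Vb))
  (r : T) (u : T) (c : color)
  (u_in : u \in component e r)
  (u_uncol : u \notin Vp :|: Vb)
  (u_legal : legal e (Vp, Vb) u c)
  (all_dom : forall x, x \in component e r ->
      dominated e (play (Vp, Vb) u c).1 x /\
      dominated e (play (Vp, Vb) u c).2 x)
  (s : seq (T * color)) (s_legal : legal_seq e (Vp, Vb) s) :
  forall v, v \in component e r ->
    ~~ (cnbhd e v \subset (play_seq (Vp, Vb) s).1) /\
    ~~ (cnbhd e v \subset (play_seq (Vp, Vb) s).2).
Proof.
move=> v vC.
have closed : forall x w, x \in component e r -> w \in cnbhd e x ->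
    w \in component e r.
  move=> x w; rewrite /component !inE => Hx /orP[/eqP->//|Hxw].
  exact: connect_trans Hx (connect1 Hxw).
have Hdisj : disjp (Vp, Vb).
  move=> x d H1 H2; move: disj; rewrite -setI_eq0 => /eqP H.
  have : x \in Vp :&: Vb by case: d H1 H2 => /= H1 H2; rewrite inE H1 H2.
  by rewrite H inE.
case: c all_dom u_legal => all_dom _.
- have Hd : forall w, w \in component e r ->
      cnbhd e w :&: colset (Vp, Vb) cb != set0.
    by move=> w /all_dom [_].
  have [H1 H2] := main_d (d:=cb) closed Hdisj (fun v => proj2 (no_mono v)) Hd s_legal vC.
  by split.
- have Hd : forall w, w \in component e r ->
      cnbhd e w :&: colset (Vp, Vb) cp != set0.
    by move=> w /all_dom [].
  have [H1 H2] := main_d (d:=cp) closed Hdisj (fun v => proj1 (no_mono v)) Hd s_legal vC.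
  by split.
Qed.
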